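(* (i) Let $E$ be a finite set and $\xi\mapsto A(\xi)$, $\xi\in\mathbb R$, a $C^1$ family of complex square matrices indexed by $E\times E$. Assume there is an invertible matrix $U$ such that $\widetilde A(\xi):=A(\xi)U$ is self-adjoint for all $\xi$ and $\partial_\xi\widetilde A(\xi)\geq\beta I$ for some $\beta>0$. Then for every $\alpha>0$, $$\big|\{\xi\in\mathbb R:\|A^{-1}(\xi)\|_0\geq\alpha^{-1}\}\big|\leq2|E|\alpha\beta^{-1}\|U\|_0.$$ (ii) In particular, if $A(\xi)=Z+\xi W$ with $Z,W$ self-adjoint, $W$ invertible and $\beta_1I\leq Z\leq\beta_2I$ with $\beta_1>0$, then for every $\alpha>0$ $$\big|\{\xi\in\mathbb R:\|A^{-1}(\xi)\|_0\geq\alpha^{-1}\}\big|\leq2|E|\alpha\beta_2\beta_1^{-1}\|W^{-1}\|_0.$$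
   Context: $\|\cdot\|_0$ is the operator norm on $\mathbb C^E$ with its Euclidean norm; $\|A^{-1}(\xi)\|_0:=+\infty$ if $A(\xi)$ is not invertible; $|E|$ is the cardinality of $E$; $|\cdot|$ of a subset of $\mathbb R$ is its Lebesgue measure. *)

(* Defs.v *)
From HB Require Import structures.
From mathcomp Require Import all_boot all_order all_algebra.
From mathcomp Require Import all_classical all_reals all_analysis.
From mathcomp.real_closed Require Import complex.
Set Implicit Arguments. Unset Strict Implicit. Unset Printing Implicit Defensive.
Import Order.TTheory GRing.Theory Num.Theory.
Import numFieldNormedType.Exports.
Local Open Scope ring_scope.
Local Open Scope classical_set_scope.

(* Complex numbers are R[i] = complex R for R : realType.
   The finite set E is represented by 'I_n (so |E| = n). *)

Section Defs.
Variable R : realType.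
Local Notation C := (complex R).

Definition adjmx m p (M : 'M[C]_(m, p)) : 'M[C]_(p, m) :=
  \matrix_(i, j) conjc (M j i).

Definition selfadj n (M : 'M[C]_n) : Prop := adjmx M = M.

(* Loewner order: M >= 0 iff v^* M v >= 0 (nonnegative real) for all v *)
Definition psd n (M : 'M[C]_n) : Prop :=
  forall v : 'cV[C]_n, 0 <= (adjmx v *m M *m v) 0 0.

Definition loewner_le n (M1 M2 : 'M[C]_n) : Prop := psd (M2 - M1).

Definition rC (x : R) : C := Complex x 0.

Definition vnorm n (v : 'cV[C]_n) : R :=
  Num.sqrt (\sum_i (Normc.normc (v i 0)) ^+ 2).

Definition opnorm n (M : 'M[C]_n) : R :=
  sup [set vnorm (M *m v) | v in [set v : 'cV[C]_n | vnorm v = 1]].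

Definition opnorm_inv n (M : 'M[C]_n) : \bar R :=
  if M \in unitmx then (opnorm (invmx M))%:E else +oo%E.

Definition reF n (F : R -> 'M[C]_n) (i j : 'I_n) : R -> R :=
  fun t => complex.Re (F t i j).
Definition imF n (F : R -> 'M[C]_n) (i j : 'I_n) : R -> R :=
  fun t => complex.Im (F t i j).

Definition C1_family n (F : R -> 'M[C]_n) : Prop :=
  forall i j : 'I_n,
    (forall x, derivable (reF F i j) x 1) /\ continuous (fun x : R => (reF F i j)^`() x) /\
    (forall x, derivable (imF F i j) x 1) /\ continuous (fun x : R => (imF F i j)^`() x).

Definition deriv_mx n (F : R -> 'M[C]_n) (x : R) : 'M[C]_n :=
  \matrix_(i, j) Complex ((reF F i j)^`() x) ((imF F i j)^`() x).

Definition bad_set n (A : R -> 'M[C]_n) (alpha : R) : set R :=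
  [set xi | ((alpha^-1)%:E <= opnorm_inv (A xi))%E].

End Defs.

(* Main.v *)
Require Import Defs.
From HB Require Import structures.
From mathcomp Require Import all_boot all_order all_algebra.
From mathcomp Require Import all_classical all_reals all_analysis.
From mathcomp.real_closed Require Import complex.
From mathcomp Require Import ring lra zify.
Import Order.TTheory GRing.Theory Num.Theory.
Import numFieldNormedType.Exports.
Local Open Scope ring_scope.
Set Implicit Arguments. Unset Strict Implicit. Unset Printing Implicit Defensive.

Section LA.
Variable R : realType.
Local Notation C := (complex R).

Lemma adjmxE m p (M : 'M[C]_(m, p)) : adjmx M = map_mx Num.conj (M^T).
Proof. by apply/matrixP => i j; rewrite !mxE. Qed.

Lemma adjmx_mul m p q (A : 'M[C]_(m, p)) (B : 'M[C]_(p, q)) :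
  adjmx (A *m B) = adjmx B *m adjmx A.
Proof. by rewrite !adjmxE trmx_mul map_mxM. Qed.

Lemma adjmxK m p (A : 'M[C]_(m, p)) : adjmx (adjmx A) = A.
Proof. by apply/matrixP => i j; rewrite !mxE conjcK. Qed.

Lemma adjmxD m p (A B : 'M[C]_(m, p)) : adjmx (A + B) = adjmx A + adjmx B.
Proof. by apply/matrixP => i j; rewrite !mxE rmorphD. Qed.

Lemma adjmxN m p (A : 'M[C]_(m, p)) : adjmx (- A) = - adjmx A.
Proof. by apply/matrixP => i j; rewrite !mxE rmorphN. Qed.

Lemma adjmx1 m : adjmx (1%:M : 'M[C]_m) = 1%:M.
Proof. by apply/matrixP => i j; rewrite !mxE eq_sym rmorph_nat. Qed.

Definition nc (z : C) : R := complex.Re z ^+ 2 + complex.Im z ^+ 2.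
Definition nsq m (v : 'cV[C]_m) : R := \sum_i nc (v i 0).
Definition qf m (H : 'M[C]_m) (v : 'cV[C]_m) : R :=
  complex.Re ((adjmx v *m H *m v) 0 0).
Definition decomp m (H Q : 'M[C]_m) (d : 'I_m -> R) :=
  [/\ adjmx Q *m Q = 1%:M, Q *m adjmx Q = 1%:M &
      H = Q *m diag_mx (\row_i rC (d i)) *m adjmx Q].

Lemma nc_ge0 z : 0 <= nc z.
Proof. by rewrite /nc addr_ge0 // sqr_ge0. Qed.

Lemma nc_eq0 z : (nc z == 0) = (z == 0).
Proof.
case: z => a b; rewrite /nc /= paddr_eq0 ?sqr_ge0 // !sqrf_eq0.
by rewrite eq_complex.
Qed.

Lemma Re_sum (I : finType) (F : I -> C) :
  complex.Re (\sum_i F i) = \sum_i complex.Re (F i).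
Proof. by rewrite raddf_sum. Qed.

Lemma Re_conj_mul (r : R) (z : C) : complex.Re (conjc z * rC r * z) = r * nc z.
Proof. case: z => a b; rewrite /nc /rC /=. ring. Qed.

Lemma nc_mul (r : R) (z : C) : nc (rC r * z) = r ^+ 2 * nc z.
Proof. case: z => a b; rewrite /nc /rC /=. ring. Qed.

Lemma nsqE m (v : 'cV[C]_m) : nsq v = complex.Re ((adjmx v *m v) 0 0).
Proof.
rewrite /nsq !mxE Re_sum; apply: eq_bigr => i _; rewrite !mxE.
case: (v i 0) => a b; rewrite /nc /=. ring.
Qed.

Lemma nsq_ge0 m (v : 'cV[C]_m) : 0 <= nsq v.
Proof. by rewrite /nsq sumr_ge0 // => i _; apply: nc_ge0. Qed.

Lemma nsq_eq0 m (v : 'cV[C]_m) : (nsq v == 0) = (v == 0).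
Proof.
rewrite /nsq psumr_eq0; last by move=> i _; apply: nc_ge0.
apply/allP/eqP => [H|->]; last first.
  by move=> i _ /=; rewrite mxE nc_eq0.
apply/matrixP => i j; rewrite ord1 mxE; apply/eqP; rewrite -nc_eq0.
exact: H (mem_index_enum _).
Qed.

Lemma nsq_iso m (Q : 'M[C]_m) (w : 'cV[C]_m) :
  adjmx Q *m Q = 1%:M -> nsq (Q *m w) = nsq w.
Proof.
by move=> HQ; rewrite !nsqE adjmx_mul mulmxA -(mulmxA (adjmx w)) HQ mulmx1.
Qed.

Lemma qf_decomp m (H Q : 'M[C]_m) d (v : 'cV[C]_m) : decomp H Q d ->
  qf H v = \sum_i d i * nc ((adjmx Q *m v) i 0).
Proof.
case=> _ _ ->; rewrite /qf.
set w := adjmx Q *m v.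
have -> : adjmx v *m (Q *m diag_mx (\row_i rC (d i)) *m adjmx Q) *m v
         = adjmx w *m diag_mx (\row_i rC (d i)) *m w.
  by rewrite /w adjmx_mul adjmxK !mulmxA.
rewrite mul_mx_diag !mxE Re_sum; apply: eq_bigr => i _; rewrite !mxE.
exact: Re_conj_mul.
Qed.

Lemma nsqH_decomp m (H Q : 'M[C]_m) d (v : 'cV[C]_m) : decomp H Q d ->
  nsq (H *m v) = \sum_i (d i) ^+ 2 * nc ((adjmx Q *m v) i 0).
Proof.
case=> HQ HQ' HH; rewrite HH -!mulmxA nsq_iso // /nsq.
apply: eq_bigr => i _; rewrite mul_diag_mx !mxE; exact: nc_mul.
Qed.

Lemma nsq_decomp m (Q : 'M[C]_m) (v : 'cV[C]_m) : Q *m adjmx Q = 1%:M ->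
  nsq v = \sum_i nc ((adjmx Q *m v) i 0).
Proof.
move=> HQ; rewrite -[in LHS](nsq_iso v (_ : adjmx (adjmx Q) *m adjmx Q = 1%:M)) //.
by rewrite adjmxK.
Qed.

End LA.

Section LA2.
Variable R : realType.
Local Notation C := (complex R).

Lemma herm_decomp m (H : 'M[C]_m) : adjmx H = H -> exists Q d, decomp H Q d.
Proof.
move=> Hh.
have Hn : H \is normalmx by apply/normalmxP; rewrite -adjmxE Hh.
have /orthomx_spectralP HP := Hn.
set P := spectralmx H in HP; set sp := spectral_diag H in HP.
have Pu : P *m adjmx P = 1%:M by rewrite adjmxE; apply/unitarymxP/spectral_unitarymx.
have Punit : P \in unitmx by apply: spectral_unit.
have iP : invmx P = adjmx P by rewrite adjmxE invmx_unitary // spectral_unitarymx.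
have PP : adjmx P *m P = 1%:M by rewrite -iP mulVmx.
have D : P *m H *m adjmx P = diag_mx sp.
  by rewrite HP iP !mulmxA Pu mul1mx -mulmxA Pu mulmx1.
have Dh : adjmx (diag_mx sp) = diag_mx sp.
  by rewrite -D !adjmx_mul adjmxK Hh mulmxA.
have spr i : sp 0 i = rC (complex.Re (sp 0 i)).
  have /matrixP /(_ i i) := Dh; rewrite !mxE eqxx /= mulr1n.
  case: (sp 0 i) => a b /= [] Hb.
  have -> : b = 0 by lra.
  by [].
exists (adjmx P), (fun i => complex.Re (sp 0 i)); split.
- by rewrite adjmxK.
- by rewrite adjmxK.
rewrite adjmxK -iP {1}HP; congr (_ *m diag_mx _ *m _).
by apply/rowP => i; rewrite mxE -spr.
Qed.
End LA2.

Section LA3.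
Variable R : realType.
Local Notation C := (complex R).

Lemma ker_nonzero p m (K : 'M[C]_(p, m)) : (\rank K < m)%N ->
  exists2 v : 'cV[C]_m, v != 0 & K *m v = 0.
Proof.
move=> rK; set X := kermx K^T.
have rX : \rank X = (m - \rank K)%N by rewrite mxrank_ker mxrank_tr.
have X0 : X != 0 by rewrite -mxrank_eq0 rX subn_eq0 -ltnNge.
have [i Hi] : exists i, row i X != 0.
  apply/existsP; apply: contraR X0 => /existsPn H.
  apply/eqP/row_matrixP => i; rewrite row0; apply/eqP; exact: negbNE (H i).
have uK : row i X *m K^T = 0 by apply/sub_kermxP; exact: row_sub.
exists (row i X)^T.
  by apply: contra Hi => /eqP /(congr1 trmx); rewrite trmxK trmx0 => ->.
by rewrite -(trmxK K) -trmx_mul uK trmx0.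
Qed.

Lemma rowsub_mulE m k (f : 'I_k -> 'I_m) (M : 'M[C]_m) (v : 'cV[C]_m) j :
  (rowsub f M *m v) j 0 = (M *m v) (f j) 0.
Proof. by rewrite !mxE; apply: eq_bigr => l _; rewrite !mxE. Qed.

Lemma two_sets_ker m (M1 M2 : 'M[C]_m) (A1 A2 : {set 'I_m}) :
  (m < #|A1| + #|A2|)%N ->
  exists2 v : 'cV[C]_m, v != 0 &
    (forall i, i \notin A1 -> (M1 *m v) i 0 = 0) /\
    (forall i, i \notin A2 -> (M2 *m v) i 0 = 0).
Proof.
move=> Hc.
set K1 := rowsub (@enum_val _ (~: A1)) M1.
set K2 := rowsub (@enum_val _ (~: A2)) M2.
have c1 := cardsC A1; have c2 := cardsC A2; rewrite card_ord in c1 c2.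
have rK : (\rank (col_mx K1 K2) < m)%N.
  apply: leq_ltn_trans (rank_leq_row _) _.
  have HH : (#|~: A1| + #|~: A2| < m)%N by lia.
  exact: HH.
have [v v0 Kv] := ker_nonzero rK.
exists v => //; rewrite mul_col_mx in Kv; split => i Hi.
- have Hi' : i \in ~: A1 by rewrite inE.
  have /matrixP /(_ (lshift _ (enum_rank_in Hi' i)) 0) := Kv.
  by rewrite col_mxEu rowsub_mulE enum_rankK_in // => ->; rewrite mxE.
- have Hi' : i \in ~: A2 by rewrite inE.
  have /matrixP /(_ (rshift _ (enum_rank_in Hi' i)) 0) := Kv.
  by rewrite col_mxEd rowsub_mulE enum_rankK_in // => ->; rewrite mxE.
Qed.

Lemma qf_le m (H Q : 'M[C]_m) d (v : 'cV[C]_m) (A : {set 'I_m}) c :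
  decomp H Q d -> (forall i, i \in A -> d i <= c) ->
  (forall i, i \notin A -> (adjmx Q *m v) i 0 = 0) -> qf H v <= c * nsq v.
Proof.
move=> HD Hd Hv; rewrite (qf_decomp v HD).
have [_ HQ _] := HD; rewrite (nsq_decomp v HQ) mulr_sumr; apply: ler_sum => i _.
case: (boolP (i \in A)) => iA.
  by rewrite ler_wpM2r ?nc_ge0 ?Hd.
by rewrite Hv // (_ : nc 0 = 0) ?mulr0 //; apply/eqP; rewrite nc_eq0.
Qed.

Lemma qf_ge m (H Q : 'M[C]_m) d (v : 'cV[C]_m) (A : {set 'I_m}) c :
  decomp H Q d -> (forall i, i \in A -> c <= d i) ->
  (forall i, i \notin A -> (adjmx Q *m v) i 0 = 0) -> c * nsq v <= qf H v.
Proof.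
move=> HD Hd Hv; rewrite (qf_decomp v HD).
have [_ HQ _] := HD; rewrite (nsq_decomp v HQ) mulr_sumr; apply: ler_sum => i _.
case: (boolP (i \in A)) => iA.
  by rewrite ler_wpM2r ?nc_ge0 ?Hd.
by rewrite Hv // (_ : nc 0 = 0) ?mulr0 //; apply/eqP; rewrite nc_eq0.
Qed.

End LA3.

Section LA4.
Variable R : realType.
Local Notation C := (complex R).

Lemma core m (H1 H2 Q1 Q2 : 'M[C]_m) d1 d2 (c del : R) (k : nat) :
  decomp H1 Q1 d1 -> decomp H2 Q2 d2 ->
  (forall v, qf H1 v + del * nsq v <= qf H2 v) ->
  (#|[set i | (d1 i < - c)%R]| < k)%N -> (k <= #|[set i | (d2 i <= c)%R]|)%N ->
  del <= 2 * c.
Proof.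
move=> D1 D2 Hq Hk1 Hk2.
set B := [set i | (d1 i < - c)%R]; set A2 := [set i | (d2 i <= c)%R].
have cB := cardsC B; rewrite card_ord in cB.
have Hc : (m < #|~: B| + #|A2|)%N by rewrite -/B in Hk1; rewrite -/A2 in Hk2; lia.
have [v v0 [Hv1 Hv2]] := two_sets_ker (adjmx Q1) (adjmx Q2) Hc.
have q1 : - c * nsq v <= qf H1 v.
  apply: (qf_ge D1 _ Hv1) => i; rewrite !inE -leNgt; exact.
have q2 : qf H2 v <= c * nsq v.
  apply: (qf_le D2 _ Hv2) => i; rewrite !inE; exact.
have np : 0 < nsq v by rewrite lt_def nsq_ge0 nsq_eq0 v0.
have := Hq v; rewrite leNgt; apply: contraNle => Hd.
nra.
Qed.

End LA4.

Section Q.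
Variable R : realType.
Local Notation C := (complex R).

Lemma qfB m (M1 M2 : 'M[C]_m) v : qf (M2 - M1) v = qf M2 v - qf M1 v.
Proof.
rewrite /qf mulmxBr mulmxBl.
have -> : forall (A B : 'M[C]_1), (A - B) 0 0 = A 0 0 - B 0 0 by move=> A B; rewrite !mxE.
by rewrite raddfB.
Qed.

Lemma qf_scalar m (b : R) (v : 'cV[C]_m) : qf (rC b)%:M v = b * nsq v.
Proof.
rewrite /qf mul_mx_scalar -scalemxAl mxE nsqE.
by case: ((adjmx v *m v) 0 0) => x y; rewrite /rC /=; ring.
Qed.

Lemma Re_ge0 (z : C) : 0 <= z -> 0 <= complex.Re z.
Proof. by case: z => a b /andP [_ ]. Qed.

Lemma loewner_qf m (M1 M2 : 'M[C]_m) v : loewner_le M1 M2 -> qf M1 v <= qf M2 v.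
Proof.
move=> /(_ v) /Re_ge0 H; rewrite -subr_ge0 -qfB; exact: H.
Qed.

Lemma qf_expand m (M : 'M[C]_m) (v : 'cV[C]_m) :
  qf M v = \sum_j \sum_i
    (complex.Re (conjc (v i 0) * v j 0) * complex.Re (M i j)
     - complex.Im (conjc (v i 0) * v j 0) * complex.Im (M i j)).
Proof.
rewrite /qf !mxE Re_sum; apply: eq_bigr => j _.
rewrite !mxE mulr_suml Re_sum; apply: eq_bigr => i _; rewrite !mxE.
case: (v i 0) => a b; case: (v j 0) => c d; case: (M i j) => e f /=; ring.
Qed.

End Q.

Section D.
Variable R : realType.
Local Notation C := (complex R).

Lemma qf_derive m (F : R -> 'M[C]_m) (v : 'cV[C]_m) x :
  (forall i j, derivable (reF F i j) x 1 /\ derivable (imF F i j) x 1) ->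
  is_derive x 1 (fun t => qf (F t) v) (qf (deriv_mx F x) v).
Proof.
move=> Hd.
set p := fun i j => conjc (v i 0) * v j 0.
have -> : (fun t => qf (F t) v) = \sum_j \sum_i
    (complex.Re (p i j) \*: reF F i j - complex.Im (p i j) \*: imF F i j).
  apply/funext => t; rewrite qf_expand fct_sumE; apply: eq_bigr => j _.
  rewrite fct_sumE; apply: eq_bigr => i _ //.
rewrite qf_expand; apply: is_derive_sum => j; apply: is_derive_sum => i.
rewrite !mxE /=.
have [d1 d2] := Hd i j.
apply: is_deriveB; apply: is_deriveZ; rewrite derive1E; exact: derivableP.
Qed.

End D.
Local Open Scope classical_set_scope.
Section D2.
Variable R : realType.
Local Notation C := (complex R).

Lemma H_derivable m (A : R -> 'M[C]_m) (U : 'M[C]_m) x :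
  (forall i j, derivable (reF A i j) x 1 /\ derivable (imF A i j) x 1) ->
  forall i j, derivable (reF (fun t => A t *m U) i j) x 1 /\
              derivable (imF (fun t => A t *m U) i j) x 1.
Proof.
move=> Hd i j.
have -> : reF (fun t => A t *m U) i j = \sum_l
    (complex.Re (U l j) \*: reF A i l - complex.Im (U l j) \*: imF A i l).
  apply/funext => t; rewrite fct_sumE /reF mxE Re_sum; apply: eq_bigr => l _.
  transitivity (complex.Re (U l j) * complex.Re (A t i l)
                - complex.Im (U l j) * complex.Im (A t i l)); last by [].
  by case: (A t i l) => a b; case: (U l j) => c d /=; ring.
have -> : imF (fun t => A t *m U) i j = \sum_l
    (complex.Im (U l j) \*: reF A i l + complex.Re (U l j) \*: imF A i l).
  apply/funext => t; rewrite fct_sumE /imF mxE raddf_sum; apply: eq_bigr => l _.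
  transitivity (complex.Im (U l j) * complex.Re (A t i l)
                + complex.Re (U l j) * complex.Im (A t i l)); last by [].
  by case: (A t i l) => a b; case: (U l j) => c d /=; ring.
split; apply: derivable_sum => l; have [d1 d2] := Hd i l.
  by apply: derivableB; apply: derivableZ.
by apply: derivableD; apply: derivableZ.
Qed.

Lemma qf_mono m (H : R -> 'M[C]_m) (b : R) (v : 'cV[C]_m) :
  (forall x i j, derivable (reF H i j) x 1 /\ derivable (imF H i j) x 1) ->
  (forall x, loewner_le (rC b)%:M (deriv_mx H x)) ->
  forall x y, x <= y -> qf (H x) v + b * (y - x) * nsq v <= qf (H y) v.
Proof.
move=> Hd Hl x y xy.
have Hder (t : R) : is_derive t (1 : R) (fun t => qf (H t) v) (qf (deriv_mx H t) v).
  exact: qf_derive.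
have Hcont : {within `[x, y], continuous (fun t => qf (H t) v)}.
  apply: continuous_subspaceT => z.
  apply: differentiable_continuous; apply/derivable1_diffP.
  exact: ex_derive.
have [c _ Hc] := MVT_segment xy (fun t _ => Hder t) Hcont.
have Hb : b * nsq v <= qf (deriv_mx H c) v by rewrite -qf_scalar; exact: loewner_qf.
have : qf (H y) v - qf (H x) v = qf (deriv_mx H c) v * (y - x) by exact: Hc.
have : 0 <= y - x by lra.
nra.
Qed.
End D2.

Local Open Scope classical_set_scope.
Section M.
Variable R : realType.

Lemma lm_mono (A B : set R) : A `<=` B -> (lebesgue_measure A <= lebesgue_measure B)%E.
Proof.
move=> AB; rewrite /lebesgue_measure /lebesgue_stieltjes_measure /measure_extension.
exact: le_outer_measure.
Qed.

Lemma lm_sub (F : (set R)^nat) n :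
  (lebesgue_measure (\big[setU/set0]_(i < n) F i) <= \sum_(i < n) lebesgue_measure (F i))%E.
Proof.
rewrite /lebesgue_measure /lebesgue_stieltjes_measure /measure_extension.
exact: outer_measure_subadditive.
Qed.

Lemma measure_small (S : set R) (d : R) : 0 <= d ->
  (forall x y, S x -> S y -> x < y -> y - x <= d) ->
  (lebesgue_measure S <= d%:E)%E.
Proof.
move=> d0 HS.
case: (eqVneq S set0) => [->|/set0P [x0 Sx0]].
  by rewrite measure0 lee_fin.
have lb : has_lbound S.
  exists (x0 - d) => y Sy.
  case: (ltP y x0) => [yx|xy]; last by rewrite lerBlDr (le_trans xy) // lerDl.
  have := HS _ _ Sy Sx0 yx; lra.
set a := inf S.
have sub : S `<=` [set` `[a, a + d]%R].
  move=> y Sy; rewrite /= in_itv /=; apply/andP; split.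
    exact: ge_inf.
  rewrite leNgt; apply/negP => ya.
  have yp : 0 < y - d - a by rewrite /a; lra.
  have [x Sx xa] := inf_adherent yp (conj (ex_intro _ _ Sy) lb).
  have xy : x < y by rewrite /a in xa; lra.
  have := HS _ _ Sx Sy xy; rewrite /a in xa; lra.
apply: le_trans (lm_mono sub) _.
rewrite lebesgue_measure_itv /=.
case: ifP => _; last by rewrite lee_fin.
by rewrite -EFinD lee_fin; lra.
Qed.
End M.

Local Open Scope classical_set_scope.
Section LA5.
Variable R : realType.
Local Notation C := (complex R).

Lemma rCM (a b : R) : rC a * rC b = rC (a * b).
Proof. by rewrite /rC /=; congr Complex; ring. Qed.

Lemma vnormE m (v : 'cV[C]_m) : vnorm v = Num.sqrt (nsq v).
Proof.
rewrite /vnorm /nsq; congr Num.sqrt; apply: eq_bigr => i _.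
by case: (v i 0) => a b; rewrite /nc /= sqr_sqrtr // addr_ge0 // sqr_ge0.
Qed.

Lemma nsq_le_decomp m (H Q : 'M[C]_m) d (v : 'cV[C]_m) K :
  decomp H Q d -> (forall i, (d i) ^+ 2 <= K) -> nsq (H *m v) <= K * nsq v.
Proof.
move=> HD Hd; rewrite (nsqH_decomp v HD).
have [_ HQ _] := HD; rewrite (nsq_decomp v HQ) mulr_sumr; apply: ler_sum => i _.
by rewrite ler_wpM2r ?nc_ge0 ?Hd.
Qed.

Lemma decomp_inv m (H Q : 'M[C]_m) d :
  decomp H Q d -> (forall i, d i != 0) ->
  H \in unitmx /\ decomp (invmx H) Q (fun i => (d i)^-1).
Proof.
move=> [HQ1 HQ2 HH] dn0.
set G := Q *m diag_mx (\row_i rC (d i)^-1) *m adjmx Q.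
have HG : H *m G = 1%:M.
  have DD : diag_mx (\row_i rC (d i)) *m diag_mx (\row_i rC (d i)^-1) = 1%:M.
    apply/matrixP => i j; rewrite mul_diag_mx !mxE.
    case: (eqVneq i j) => [->|ij]; last by rewrite mulr0.
    by rewrite !mulr1n rCM mulfV.
  rewrite HH /G !mulmxA -(mulmxA _ (adjmx Q) Q) HQ1 mulmx1.
  by rewrite -(mulmxA Q) DD mulmx1 HQ2.
have [Hu _] := mulmx1_unit HG.
split => //; split => //.
by rewrite -[invmx H]mulmx1 -HG mulmxA mulVmx // mul1mx.
Qed.

Lemma opnorm_ub m (M : 'M[C]_m) (K : R) : 0 <= K ->
  (forall v, vnorm v = 1 -> vnorm (M *m v) <= K) -> opnorm M <= K.
Proof.
move=> K0 HK; rewrite /opnorm.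
set S := [set _ | _ in _].
case: (eqVneq S set0) => [S0|/set0P Sn].
  by rewrite S0 sup0.
apply: ge_sup => // y [v /= v1 <-]; exact: HK.
Qed.

Lemma nsq_scale m (a : R) (v : 'cV[C]_m) : nsq (rC a *: v) = a ^+ 2 * nsq v.
Proof. by rewrite /nsq mulr_sumr; apply: eq_bigr => i _; rewrite mxE nc_mul. Qed.

Lemma vnorm1_nsq m (v : 'cV[C]_m) : vnorm v = 1 -> nsq v = 1.
Proof. by rewrite vnormE => H; rewrite -(sqr_sqrtr (nsq_ge0 v)) H expr1n. Qed.

Lemma opnorm_hasub m (M : 'M[C]_m) :
  has_ubound [set vnorm (M *m v) | v in [set v : 'cV[C]_m | vnorm v = 1]].
Proof.
have HMh : adjmx (adjmx M *m M) = adjmx M *m M by rewrite adjmx_mul adjmxK.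
have [Q [d HD]] := herm_decomp HMh.
exists (Num.sqrt (\sum_i `|d i|)) => y [v /= v1 <-].
rewrite vnormE ler_sqrt; last by apply: sumr_ge0 => i _; exact: normr_ge0.
have -> : nsq (M *m v) = qf (adjmx M *m M) v.
  by rewrite nsqE /qf adjmx_mul !mulmxA.
rewrite -[X in _ <= X]mulr1 -(vnorm1_nsq v1).
apply: (qf_le (A := [set: 'I_m]) HD) => [i _|i]; last by rewrite inE.
rewrite (le_trans (ler_norm _)) // (bigD1 i) //= lerDl sumr_ge0 // => j _.
Qed.

Lemma opnorm_le_vec m (M : 'M[C]_m) (w : 'cV[C]_m) :
  vnorm (M *m w) <= opnorm M * vnorm w.
Proof.
case: (eqVneq w 0) => [->|w0].
  by rewrite mulmx0 !vnormE (_ : nsq 0 = 0) ?sqrtr0 ?mulr0 //; apply/eqP; rewrite nsq_eq0.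
have np : 0 < nsq w by rewrite lt_def nsq_ge0 nsq_eq0 w0.
set r := vnorm w.
have r0 : 0 < r by rewrite /r vnormE sqrtr_gt0.
set u := rC r^-1 *: w.
have u1 : vnorm u = 1.
  rewrite vnormE nsq_scale -[nsq w](sqr_sqrtr (nsq_ge0 w)) -vnormE -/r.
  by rewrite -exprMn mulVf ?gt_eqF // expr1n sqrtr1.
have Mu : vnorm (M *m u) <= opnorm M.
  apply: sup_upper_bound; last by exists u.
  by split; [exists (vnorm (M *m u)), u | exact: opnorm_hasub].
have : vnorm (M *m u) = r^-1 * vnorm (M *m w).
  rewrite /u -scalemxAr !vnormE nsq_scale sqrtrM ?sqr_ge0 // sqrtr_sqr.
  by rewrite ger0_norm // invr_ge0 ltW.
move=> Hu; rewrite Hu in Mu.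
by rewrite -ler_pdivrMr // mulrC.
Qed.

End LA5.

Local Open Scope classical_set_scope.
Section Main.
Variable R : realType.
Local Notation C := (complex R).

Lemma opnorm_ge0 m (M : 'M[C]_m) : 0 <= opnorm M.
Proof.
rewrite /opnorm; set S := [set _ | _ in _].
case: (eqVneq S set0) => [S0|/set0P [y Sy]]; first by rewrite S0 sup0.
apply: le_trans (_ : y <= _).
  by case: Sy => v _ <-; rewrite vnormE sqrtr_ge0.
apply: sup_upper_bound => //; split; [by exists y | exact: opnorm_hasub].
Qed.

Lemma inv_unit_bound m (A U Q : 'M[C]_m) d (c : R) :
  decomp (A *m U) Q d -> (forall i, c < `|d i|) -> 0 <= c ->
  exists2 m0, c < m0 & A \in unitmx /\ opnorm (invmx A) <= opnorm U / m0.
Proof.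
move=> HD Hc c0.
set m0 := \big[Num.min/(c + 1)]_i `|d i|.
have m0c : c < m0.
  rewrite /m0; elim/big_ind: _ => // [|x y Hx Hy]; first lra.
  by rewrite lt_min Hx Hy.
have m0d i : m0 <= `|d i| by rewrite /m0 (bigD1 i) //= ge_min lexx.
have m0p : 0 < m0 by lra.
have dn0 i : d i != 0.
  by rewrite -normr_gt0; apply: lt_le_trans (m0d i); lra.
have [Hu Dinv] := decomp_inv HD dn0.
have Ainv : A *m (U *m invmx (A *m U)) = 1%:M by rewrite mulmxA mulmxV.
have [Au _] := mulmx1_unit Ainv.
have iA : invmx A = U *m invmx (A *m U).
  by rewrite -[invmx A]mulmx1 -Ainv !mulmxA mulVmx // mul1mx.
exists m0 => //; split => //.
apply: opnorm_ub; first by rewrite divr_ge0 ?opnorm_ge0 // ltW.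
move=> v v1; rewrite iA -mulmxA.
apply: le_trans (opnorm_le_vec _ _) _.
rewrite ler_wpM2l ?opnorm_ge0 // vnormE.
have : nsq (invmx (A *m U) *m v) <= m0^-2 * nsq v.
  apply: (nsq_le_decomp _ Dinv) => i.
  have h1 : `|d i|^-1 <= m0^-1.
    by rewrite lef_pV2 ?posrE ?normr_gt0 ?dn0 // ?m0d.
  have h2 : 0 <= `|d i|^-1 by rewrite invr_ge0 normr_ge0.
  rewrite -[X in X <= _]real_normK ?num_real // normfV -exprVn.
  set a := `|d i|^-1 in h1 h2 *; set b := m0^-1 in h1 *.
  nra.
rewrite (vnorm1_nsq v1) mulr1 => H.
rewrite -(@ger0_norm _ m0^-1); last by rewrite invr_ge0 ltW.
by rewrite -sqrtr_sqr ler_sqrt ?sqr_ge0 // exprVn.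
Qed.

End Main.

Local Open Scope classical_set_scope.
Section Part1.
Variable R : realType.
Local Notation C := (complex R).

Lemma part1 (n : nat) (A : R -> 'M[complex R]_n) (U : 'M[complex R]_n) (beta : R) :
     C1_family A ->
     U \in unitmx ->
     (forall xi, selfadj (A xi *m U)) ->
     0 < beta ->
     (forall xi, loewner_le (rC beta)%:M (deriv_mx (fun t => A t *m U) xi)) ->
     forall alpha : R, 0 < alpha ->
       (lebesgue_measure (bad_set A alpha)
         <= (2 * n%:R * alpha / beta * opnorm U)%:E)%E.
Proof.
move=> HC1 HU Hsa Hb Hl alpha Ha.
set H := fun t => A t *m U.
set c := alpha * opnorm U.
have c0 : 0 <= c by rewrite mulr_ge0 ?opnorm_ge0 // ltW.
have HdA (x : R) : forall i j, derivable (reF A i j) x 1 /\ derivable (imF A i j) x 1.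
  by move=> i j; have [h1 [_ [h2 _]]] := HC1 i j; split; [exact: h1 | exact: h2].
have Hd (x : R) i j : derivable (reF H i j) x 1 /\ derivable (imF H i j) x 1.
  exact: (H_derivable U (HdA x)).
have Hmono := qf_mono _ Hd Hl.
set S := fun k : nat => [set xi | exists Q d, decomp (H xi) Q d /\
   (#|[set i | (d i < - c)%R]%SET| < k)%N /\ (k <= #|[set i | (d i <= c)%R]%SET|)%N].
have HS k : (lebesgue_measure (S k) <= (2 * c / beta)%:E)%E.
  apply: measure_small; first by apply: divr_ge0; [apply: mulr_ge0 | apply: ltW].
  move=> x y [Q1 [d1 [D1 [k1 _]]]] [Q2 [d2 [D2 [_ k2]]]] xy.
  have := core D1 D2 (fun v => Hmono v x y (ltW xy)) k1 k2.
  by rewrite ler_pdivlMr // mulrC.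
have Hsub : bad_set A alpha `<=` \big[setU/set0]_(k < n) S k.+1.
  move=> xi Hbad.
  have [Q [d HD]] := herm_decomp (Hsa xi).
  have [i0 Hi0] : exists i, `|d i| <= c.
    apply: contrapT => Hn.
    have Hc i : c < `|d i| by rewrite ltNge; apply/negP => h; apply: Hn; exists i.
    have [m0 m0c [Au Hop]] := inv_unit_bound HD Hc c0.
    move: Hbad; rewrite /bad_set /= /opnorm_inv Au lee_fin.
    have m0p : 0 < m0 by lra.
    move=> Hbad; have := le_trans Hbad Hop.
    rewrite ler_pdivlMr // => Hh.
    have : m0 <= c.
      have := ler_wpM2l (ltW Ha) Hh.
      by rewrite mulrA mulfV ?gt_eqF // mul1r.
    lra.
  set k := #|[set i | (d i <= c)%R]%SET|.
  have k1 : (0 < k)%N.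
    by apply/card_gt0P; exists i0; rewrite inE; move: Hi0; rewrite ler_norml; case/andP.
  have kn : (k <= n)%N by rewrite -[n]card_ord max_card.
  have kk : (#|[set i | (d i < - c)%R]%SET| < k)%N.
    apply: proper_card; apply/properP; split.
      apply/fintype.subsetP => i; rewrite !inE => h; lra.
    exists i0; rewrite !inE; last by rewrite -leNgt; move: Hi0; rewrite ler_norml; case/andP.
    by move: Hi0; rewrite ler_norml; case/andP.
  have kn1 : (k.-1 < n)%N by lia.
  apply: (@bigsetU_sup _ k.-1 n (fun j => S j.+1) kn1 xi).
  rewrite /S /= prednK //; exists Q, d; split => //.
apply: le_trans (lm_mono Hsub) _.
apply: (le_trans (lm_sub (fun k => S k.+1) n)).
apply: (@le_trans _ _ (\sum_(k < n) (2 * c / beta)%:E)%E); first by apply: lee_sum => k _; exact: HS.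
rewrite sumEFin lee_fin sumr_const card_ord /c.
rewrite -[_ *+ n]mulr_natr [X in _ <= X](_ : _ = 2 * (alpha * opnorm U) / beta * n%:R) //.
field. by rewrite gt_eqF.
Qed.
End Part1.

Local Open Scope classical_set_scope.
Section Part2.
Variable R : realType.
Local Notation C := (complex R).

Lemma affine_derive (a b x : R) : is_derive x (1 : R) (fun t : R => a + t * b) b.
Proof.
have -> : (fun t : R => a + t * b) = cst a + b \*: (@id R).
  by apply/funext => t /=; rewrite mulrC.
have H : is_derive x (1 : R) (cst a + b \*: (@id R)) (0 + b *: 1).
  exact: _.
by apply: is_derive_eq H _; rewrite add0r /GRing.scale /= mulr1.
Qed.

Lemma reF_affine m (M0 M1 : 'M[C]_m) i j :
  reF (fun t => M0 + rC t *: M1) i j =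
  (fun t => complex.Re (M0 i j) + t * complex.Re (M1 i j)).
Proof. apply/funext => t; rewrite /reF !mxE; case: (M0 i j) => a b; case: (M1 i j) => c d /=; ring. Qed.

Lemma imF_affine m (M0 M1 : 'M[C]_m) i j :
  imF (fun t => M0 + rC t *: M1) i j =
  (fun t => complex.Im (M0 i j) + t * complex.Im (M1 i j)).
Proof. apply/funext => t; rewrite /imF !mxE; case: (M0 i j) => a b; case: (M1 i j) => c d /=; ring. Qed.

Lemma affine_C1 m (M0 M1 : 'M[C]_m) : C1_family (fun t => M0 + rC t *: M1).
Proof.
move=> i j; rewrite reF_affine imF_affine.
split; [move=> x; apply: ex_derive; exact: affine_derive|].
split; [|split; [move=> x; apply: ex_derive; exact: affine_derive|]].
- have -> : (fun x => (fun t => complex.Re (M0 i j) + t * complex.Re (M1 i j))^`() x)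
    = cst (complex.Re (M1 i j)).
    by apply/funext => x; rewrite derive1E (@derive_val _ _ _ _ _ _ _ (affine_derive _ _ x)).
  exact: cst_continuous.
- have -> : (fun x => (fun t => complex.Im (M0 i j) + t * complex.Im (M1 i j))^`() x)
    = cst (complex.Im (M1 i j)).
    by apply/funext => x; rewrite derive1E (@derive_val _ _ _ _ _ _ _ (affine_derive _ _ x)).
  exact: cst_continuous.
Qed.

Lemma affine_deriv_mx m (M0 M1 : 'M[C]_m) x :
  deriv_mx (fun t => M0 + rC t *: M1) x = M1.
Proof.
apply/matrixP => i j; rewrite /deriv_mx mxE reF_affine imF_affine.
rewrite !derive1E !derive_val.
case: (M1 i j) => a b /=; rewrite !add0r !mul1r !scaler0 !add0r; congr Complex; by rewrite /GRing.scale /= mulr1.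
Qed.

End Part2.
Section Part2b.
Variable R : realType.
Local Notation C := (complex R).

Lemma nc1 : nc (1 : C) = 1.
Proof. by rewrite /nc /= expr1n expr0n /= addr0. Qed.
Lemma nc0 : nc (0 : C) = 0.
Proof. by rewrite /nc /= expr0n /= addr0. Qed.

Lemma sum_delta m (f : 'I_m -> R) (i : 'I_m) :
  \sum_j f j * nc ((delta_mx i 0 : 'cV[C]_m) j 0) = f i.
Proof.
rewrite (bigD1 i) //= big1 => [|j ji].
  by rewrite mxE !eqxx /= nc1 mulr1 addr0.
by rewrite mxE (negbTE ji) /= nc0 mulr0.
Qed.

Lemma eig_bounds m (Z Q : 'M[C]_m) d (b1 b2 : R) : decomp Z Q d ->
  loewner_le (rC b1)%:M Z -> loewner_le Z (rC b2)%:M -> forall i, b1 <= d i <= b2.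
Proof.
move=> HD H1 H2 i; have [HQ1 HQ2 _] := HD.
set v := Q *m (delta_mx i 0 : 'cV[C]_m).
have w : adjmx Q *m v = delta_mx i 0 by rewrite /v mulmxA HQ1 mul1mx.
have qv : qf Z v = d i by rewrite (qf_decomp v HD) w sum_delta.
have nv : nsq v = 1.
  by rewrite (nsq_decomp v HQ2) w -[RHS](sum_delta (fun _ : 'I_m => (1 : R)) i); apply: eq_bigr => j _; rewrite mul1r.
have := loewner_qf v H1; have := loewner_qf v H2.
rewrite !qf_scalar qv nv !mulr1 => h2 h1; by rewrite h1 h2.
Qed.

Lemma adjmx_scale_real m (a : R) (M : 'M[C]_m) : adjmx (rC a *: M) = rC a *: adjmx M.
Proof.
apply/matrixP => i j; rewrite !mxE rmorphM /=; congr (_ * _).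
by rewrite /rC /= oppr0.
Qed.

Lemma part2 (n : nat) (Z W : 'M[complex R]_n) (beta1 beta2 : R) :
     selfadj Z -> selfadj W -> W \in unitmx ->
     0 < beta1 ->
     loewner_le (rC beta1)%:M Z -> loewner_le Z (rC beta2)%:M ->
     forall alpha : R, 0 < alpha ->
       (lebesgue_measure (bad_set (fun xi : R => (Z + (rC xi)%:M *m W)%R) alpha)
         <= (2 * n%:R * alpha * beta2 / beta1 * opnorm (invmx W))%:E)%E.
Proof.
move=> HZ HW Wu b1p HZ1 HZ2 alpha Ha.
set A := fun xi : R => (Z + (rC xi)%:M *m W)%R.
set U := invmx W *m Z.
have [Q [d HD]] := herm_decomp HZ.
have Hd i := eig_bounds HD HZ1 HZ2 i.
have dn0 i : d i != 0 by have := Hd i; case/andP => h _; apply/negP => /eqP h'; lra.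
have [Zu _] := decomp_inv HD dn0.
have Uu : U \in unitmx by rewrite unitmx_mul unitmx_inv Wu Zu.
have AE : A = fun t => Z + rC t *: W.
  by apply/funext => t; rewrite /A mul_scalar_mx.
have adjiW : adjmx (invmx W) = invmx W.
  have : adjmx (invmx W) *m W = 1%:M.
    by rewrite -[W in _ *m W]HW -adjmx_mul mulmxV // adjmx1.
  move=> h; by rewrite -[LHS]mulmx1 -(mulmxV Wu) mulmxA h mul1mx.
have HU : (fun t => A t *m U) = fun t => Z *m U + rC t *: Z.
  apply/funext => t; rewrite AE /U mulmxDl -scalemxAl (mulmxA W) mulmxV // mul1mx.
  by [].
have P1 := @part1 R n A U beta1.
have C1 : C1_family A by rewrite AE; exact: affine_C1.
have Hsa : forall xi, selfadj (A xi *m U).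
  move=> xi; rewrite /selfadj.
  have -> : A xi *m U = Z *m U + rC xi *: Z by move: (congr1 (fun f => f xi) HU).
  rewrite adjmxD /U !adjmx_mul adjiW HZ mulmxA adjmx_scale_real HZ.
  by [].
have Hl : forall xi, loewner_le (rC beta1)%:M (deriv_mx (fun t => A t *m U) xi).
  by move=> xi; rewrite HU affine_deriv_mx.
have := P1 C1 Uu Hsa b1p Hl alpha Ha.
move=> h; apply: (le_trans h); rewrite lee_fin.
case: (posnP n) => [n0|np].
  have nR : (n%:R : R) = 0 by rewrite n0.
  by rewrite nR !mulr0 !mul0r.
have b2p : 0 <= beta2.
  have := Hd (Ordinal np); case/andP => h1 h2; lra.
have HUb : opnorm U <= opnorm (invmx W) * beta2.
  apply: opnorm_ub; first by rewrite mulr_ge0 ?opnorm_ge0.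
  move=> v v1; rewrite /U -mulmxA; apply: le_trans (opnorm_le_vec _ _) _.
  rewrite ler_wpM2l ?opnorm_ge0 // vnormE.
  have : nsq (Z *m v) <= beta2 ^+ 2 * nsq v.
    apply: (nsq_le_decomp _ HD) => i.
    have := Hd i; case/andP => h1 h2; nra.
  rewrite (vnorm1_nsq v1) mulr1 => hh.
  rewrite -(@ger0_norm _ beta2) // -sqrtr_sqr.
  by rewrite ler_sqrt ?sqr_ge0.
have -> : 2 * n%:R * alpha * beta2 / beta1 * opnorm (invmx W)
  = 2 * n%:R * alpha / beta1 * (opnorm (invmx W) * beta2).
  by field; rewrite gt_eqF.
apply: ler_wpM2l => //.
apply: mulr_ge0; last by rewrite invr_ge0 ltW.
apply: mulr_ge0; last exact: ltW.
by apply: mulr_ge0.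
Qed.
End Part2b.

Local Close Scope classical_set_scope.

Theorem lemma6p2 (R : realType) (n : nat) :
  (* (i) *)
  (forall (A : R -> 'M[complex R]_n) (U : 'M[complex R]_n) (beta : R),
     C1_family A ->
     U \in unitmx ->
     (forall xi, selfadj (A xi *m U)) ->
     0 < beta ->
     (forall xi, loewner_le (rC beta)%:M (deriv_mx (fun t => A t *m U) xi)) ->
     forall alpha : R, 0 < alpha ->
       (lebesgue_measure (bad_set A alpha)
         <= (2 * n%:R * alpha / beta * opnorm U)%:E)%E)
  /\
  (* (ii) *)
  (forall (Z W : 'M[complex R]_n) (beta1 beta2 : R),
     selfadj Z -> selfadj W -> W \in unitmx ->
     0 < beta1 ->
     loewner_le (rC beta1)%:M Z -> loewner_le Z (rC beta2)%:M ->
     forall alpha : R, 0 < alpha ->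
       (lebesgue_measure (bad_set (fun xi : R => (Z + (rC xi)%:M *m W)%R) alpha)
         <= (2 * n%:R * alpha * beta2 / beta1 * opnorm (invmx W))%:E)%E).
Proof.
split; [exact: (@part1 R n) | exact: (@part2 R n)].
Qed.
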